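(* Let $n\ge1$, $T\ge1$, $\beta\in(0,1)$, and let $\mathcal{Q}$ be the set of all matrices $D(A)$ with $A\in\mathcal{F}$, and $E=D(B)$. Then: (i) for every $D\in\mathcal{Q}$ and every $\mathbf{z}\in\mathbb{R}^{Tn}$, $\|D\mathbf{z}\|_T\le\|\mathbf{z}\|_T$; (ii) the subspace $W_T:=\{\mathbf{z}=(\mathbf{z}_1^\top,\dots,\mathbf{z}_T^\top)^\top\in\mathbb{R}^{Tn}:\ \mathbf{e}^\top\mathbf{z}_t=0 \text{ for } t=1,\dots,T\}$ satisfies $DW_T\subseteq W_T$ for all $D\in\mathcal{Q}$; (iii) for every non-zero $\mathbf{z}\in W_T$, $\|E\mathbf{z}\|_T<\|\mathbf{z}\|_T$.
   Context: $\mathbf{e}\in\mathbb{R}^n$ is the all-ones vector. For $b\in\{\beta,1\}^n$ the AIMD matrix is $A_b=\operatorname{diag}(b)+\frac1n\mathbf{e}(\mathbf{e}-b)^\top\in\mathbb{R}^{n\times n}$; $\mathcal{F}=\{A_b: b\in\{\beta,1\}^n\}$, and $B:=A_{\beta\mathbf{e}}=\beta I+\frac{1-\beta}{n}\mathbf{e}\mathbf{e}^\top$. For $A\in\mathcal{F}$, $D(A)\in\mathbb{R}^{Tn\times Tn}$ is the $T\times T$ block matrix with $n\times n$ blocks defined by: block row 1 is $(A,0,\dots,0)$; block row 2 (if $T\ge2$) is $(\tfrac12(A+I),0,\dots,0)$; for $3\le \ell\le T$, block row $\ell$ has $\tfrac1\ell A$ in block column 1, $\tfrac{\ell-1}{\ell}I$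 in block column $\ell-1$, and zero blocks elsewhere. For $\mathbf{z}=(\mathbf{z}_1^\top,\dots,\mathbf{z}_T^\top)^\top$ with $\mathbf{z}_\ell\in\mathbb{R}^n$, $\|\mathbf{z}\|_T:=\max_{\ell=1,\dots,T}\|\mathbf{z}_\ell\|_1$, where $\|\cdot\|_1$ is the usual $\ell^1$ norm on $\mathbb{R}^n$. *)

(* Defs.v *)
From HB Require Import structures.
From mathcomp Require Import all_boot all_order all_algebra.
Set Implicit Arguments. Unset Strict Implicit. Unset Printing Implicit Defensive.
Import Order.TTheory GRing.Theory Num.Theory.
Local Open Scope ring_scope.

Definition ones (R : realFieldType) (n : nat) : 'cV[R]_n := const_mx 1.

Definition AIMD (R : realFieldType) (n : nat) (b : 'cV[R]_n) : 'M[R]_n :=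
  diag_mx b^T + n%:R^-1 *: (ones R n *m (ones R n - b)^T).

Definition in_beta1 (R : realFieldType) (n : nat) (beta : R) (b : 'cV[R]_n) : Prop :=
  forall i, b i 0 = beta \/ b i 0 = 1.

Definition AIMD_family (R : realFieldType) (n : nat) (beta : R) (A : 'M[R]_n) : Prop :=
  exists b : 'cV[R]_n, in_beta1 beta b /\ A = AIMD b.

Definition Bmat (R : realFieldType) (n : nat) (beta : R) : 'M[R]_n :=
  AIMD (beta *: ones R n).

(* R^{Tn} seen as T stacked blocks of size n *)
Definition blk (T n : nat) : 'I_T -> nat := fun _ => n.
Arguments blk : clear implicits.

(* block (l, k) of D(A), with 0-based indices: block row l+1, block column k+1 *)
Definition Dblock (R : realFieldType) (n : nat) (A : 'M[R]_n) (T : nat)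
    (l k : 'I_T) : 'M[R]_n :=
  if (l == 0 :> nat) then (if (k == 0 :> nat) then A else 0)
  else if (l == 1 :> nat) then (if (k == 0 :> nat) then 2%:R^-1 *: (A + 1%:M) else 0)
  else (if (k == 0 :> nat) then (l.+1)%:R^-1 *: A else 0)
     + (if (k.+1 == l :> nat) then ((l%:R) / (l.+1)%:R) *: 1%:M else 0).

Definition Dmat (R : realFieldType) (T n : nat) (A : 'M[R]_n)
  : 'M[R]_(\sum_(i < T) blk T n i)%N :=
  @mxblock R T T (blk T n) (blk T n) (fun l k => Dblock A l k).

Definition zblock (R : realFieldType) (T n : nat)
    (z : 'cV[R]_(\sum_(i < T) blk T n i)%N) (t : 'I_T) : 'cV[R]_n :=
  @submxcol R T (blk T n) 1 z t.

Definition norm1 (R : realFieldType) (n : nat) (x : 'cV[R]_n) : R :=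
  \sum_(i < n) `|x i 0|.

(* ||z||_T = max_t ||z_t||_1 (norms are >= 0, so 0 is a neutral start) *)
Definition normT (R : realFieldType) (T n : nat)
    (z : 'cV[R]_(\sum_(i < T) blk T n i)%N) : R :=
  \big[Num.max/0]_(t < T) norm1 (zblock z t).

Definition in_WT (R : realFieldType) (T n : nat)
    (z : 'cV[R]_(\sum_(i < T) blk T n i)%N) : Prop :=
  forall t : 'I_T, (ones R n)^T *m zblock z t = 0.

(* Main.v *)
Require Import Defs.
From HB Require Import structures.
From mathcomp Require Import all_boot all_order all_algebra.
From mathcomp Require Import ring lra.
Import Order.TTheory GRing.Theory Num.Theory.
Local Open Scope ring_scope.

Section S.
Variable R : realFieldType.

Lemma zblock_mul (T n : nat) (A : 'M[R]_n) z l :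
  zblock (Dmat T A *m z) l = \sum_k Dblock A l k *m zblock z k.
Proof.
by rewrite /zblock /Dmat -{1}(submxcolK z) mul_mxblock_mxrow mxcolK.
Qed.

Lemma neq0 (T : nat) (k : 'I_T.+1) : k != ord0 -> (k == 0 :> nat) = false.
Proof. by move=> h; apply/negbTE; apply: contra h => /eqP h; apply/eqP/val_inj. Qed.
Arguments neq0 {T k}.

Lemma Dsum (T n : nat) (A : 'M[R]_n) (Z : 'I_T.+1 -> 'cV[R]_n) (l : 'I_T.+1) :
  \sum_k Dblock A l k *m Z k =
  if (l == 0 :> nat) then A *m Z ord0
  else if (l == 1 :> nat) then 2%:R^-1 *: (A *m Z ord0 + Z ord0)
  else (l.+1)%:R^-1 *: (A *m Z ord0) + ((l%:R) / (l.+1)%:R) *: Z (inord l.-1).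
Proof.
rewrite (bigD1 ord0) //= {1}/Dblock /=.
case: ifP => [l0|l0].
  by rewrite big1 ?addr0 // => k /= k0; rewrite /Dblock l0 (neq0 k0) mul0mx.
case: ifP => [l1|l1].
  rewrite big1 ?addr0; first by rewrite -scalemxAl mulmxDl mul1mx.
  by move=> k /= k0; rewrite /Dblock l0 l1 (neq0 k0) mul0mx.
have l2 : (2 <= l)%N by case: (nat_of_ord l) l0 l1 => [|[|]].
have hk : inord l.-1 != ord0 :> 'I_T.+1.
  apply/eqP => /(congr1 val) /=; rewrite inordK; first by case: (nat_of_ord l) l2 => [|[|]].
  by apply: leq_ltn_trans (ltn_ord l); apply: leq_pred.
rewrite (bigD1 (inord l.-1)) //=.
rewrite big1 ?addr0.
  rewrite /Dblock l0 l1 /= mulmxDl.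
  idtac.
  rewrite inordK; last by apply: leq_ltn_trans (ltn_ord l); apply: leq_pred.
  have -> : (l.-1 == 0)%N = false by case: (nat_of_ord l) l2 => [|[|]].
  rewrite add0r prednK ?eqxx; last by apply: leq_trans l2.
  by rewrite -!scalemxAl mul1mx eq_sym l1 mul0mx addr0.
move=> k /andP [k0 kl]; rewrite /Dblock l0 l1 (neq0 k0) add0r.
case: ifP => // /eqP kl'; last by rewrite mul0mx.
exfalso; move/eqP: kl; apply; apply: val_inj => /=.
by rewrite -kl' /= inordK // ltnW.
Qed.
End S.

Section S.
Variable R : realFieldType.

Lemma norm1_ge0 n (x : 'cV[R]_n) : 0 <= norm1 x.
Proof. by apply: sumr_ge0 => i _. Qed.

Lemma norm1D n (x y : 'cV[R]_n) : norm1 (x + y) <= norm1 x + norm1 y.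
Proof.
rewrite /norm1 -big_split /=; apply: ler_sum => i _; rewrite mxE; exact: ler_normD.
Qed.

Lemma norm1Z n (c : R) (x : 'cV[R]_n) : norm1 (c *: x) = `|c| * norm1 x.
Proof.
by rewrite /norm1 mulr_sumr; apply: eq_bigr => i _; rewrite mxE normrM.
Qed.

Lemma norm1_eq0 n (x : 'cV[R]_n) : norm1 x = 0 -> x = 0.
Proof.
move=> h; apply/matrixP => i j; rewrite (ord1 j) mxE.
have := psumr_eq0P (fun i _ => normr_ge0 (x i 0)) h (i:=i) isT.
by move/eqP; rewrite normr_eq0 => /eqP.
Qed.

Lemma normT_ub T n (z : 'cV[R]_(\sum_(i < T) blk T n i)%N) t :
  norm1 (zblock z t) <= normT z.
Proof. by rewrite /normT (bigD1 t) //= le_max lexx. Qed.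

Lemma normT_le T n (z : 'cV[R]_(\sum_(i < T) blk T n i)%N) M :
  0 <= M -> (forall t, norm1 (zblock z t) <= M) -> normT z <= M.
Proof.
move=> M0 h; rewrite /normT; elim/big_ind: _ => // x y hx hy.
by rewrite ge_max hx hy.
Qed.

Lemma normT_lt T n (z : 'cV[R]_(\sum_(i < T) blk T n i)%N) M :
  0 < M -> (forall t, norm1 (zblock z t) < M) -> normT z < M.
Proof.
move=> M0 h; rewrite /normT; elim/big_ind: _ => // x y hx hy.
by rewrite gt_max hx hy.
Qed.

Lemma normT_pos T n (z : 'cV[R]_(\sum_(i < T) blk T n i)%N) :
  z != 0 -> 0 < normT z.
Proof.
move=> nz; rewrite lt_def; apply/andP; split; last first.
  rewrite /normT; elim/big_ind: _ => // [x y hx hy|t _].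
    by rewrite le_max hx.
  exact: norm1_ge0.
apply: contra nz => /eqP h.
have hb : forall t, zblock z t = 0.
  move=> t; apply: norm1_eq0; apply/eqP; rewrite eq_le norm1_ge0 andbT.
  by rewrite -h normT_ub.
apply/eqP; rewrite -(submxcolK z).
rewrite -(mxcol0 (V:=R) (p_:=blk T n) 1).
by apply: eq_mxcol => t; exact: hb.
Qed.

End S.

Section S.
Variable R : realFieldType.

Lemma AIMD_entry n (b : 'cV[R]_n) i j :
  AIMD b i j = b i 0 *+ (i == j) + n%:R^-1 * (1 - b j 0).
Proof.
rewrite /AIMD !mxE big_ord1 !mxE.
by rewrite mul1r.
Qed.

Lemma AIMD_colsum n (b : 'cV[R]_n) j : (0 < n)%N -> \sum_i AIMD b i j = 1.
Proof.
move=> n0.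
under eq_bigr do rewrite AIMD_entry.
rewrite big_split /= sumr_const card_ord -[X in _ + X]mulr_natr mulrAC mulVf ?mul1r.
  rewrite (bigD1 j) //= eqxx mulr1n big1 ?addr0; last by move=> i /negbTE ->.
  by rewrite addrC subrK.
by rewrite pnatr_eq0 -lt0n.
Qed.

Lemma AIMD_ge0 n (beta : R) (b : 'cV[R]_n) i j : 0 < beta -> beta < 1 -> in_beta1 beta b ->
  0 <= AIMD b i j.
Proof.
move=> b0 b1 hb; rewrite AIMD_entry; apply: addr_ge0.
  by case: (hb i) => ->; rewrite mulrn_wge0 // ltW.
apply: mulr_ge0; first by rewrite invr_ge0 ler0n.
by case: (hb j) => ->; rewrite subr_ge0 // ltW.
Qed.
End S.

Section S.
Variable R : realFieldType.

Lemma norm1_mul n (A : 'M[R]_n) x : (forall i j, 0 <= A i j) ->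
  (forall j, \sum_i A i j = 1) -> norm1 (A *m x) <= norm1 x.
Proof.
move=> h0 h1; rewrite /norm1.
apply: le_trans (_ : \sum_i \sum_j A i j * `|x j 0| <= _).
  apply: ler_sum => i _; rewrite mxE.
  apply: le_trans (ler_norm_sum _ _ _) _.
  by apply: ler_sum => j _; rewrite normrM ger0_norm.
rewrite exchange_big /=; apply: ler_sum => j _.
by rewrite -mulr_suml h1 mul1r.
Qed.

Lemma ones_mul n (A : 'M[R]_n) : (forall j, \sum_i A i j = 1) ->
  (ones R n)^T *m A = (ones R n)^T.
Proof.
move=> h; apply/matrixP => i j; rewrite !mxE -(h j).
by apply: eq_bigr => k _; rewrite !mxE mul1r.
Qed.

Lemma B_mul n (beta : R) (x : 'cV[R]_n) : (ones R n)^T *m x = 0 -> Bmat n beta *m x = beta *: x.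
Proof.
move=> h; have h' : \sum_j x j 0 = 0.
  have : ((ones R n)^T *m x) 0 0 = 0 by rewrite h mxE.
  rewrite !mxE => e; rewrite -[RHS]e.
  by apply: eq_bigr => k _; rewrite !mxE mul1r.
apply/matrixP => i j; rewrite (ord1 j) !mxE.
under eq_bigr do rewrite AIMD_entry !mxE mulrDl.
rewrite big_split /= -mulr_sumr h' mulr0 addr0.
rewrite (bigD1 i) //= eqxx mulr1n big1 ?addr0 ?mulr1 // => k /negbTE.
by rewrite eq_sym => ->; rewrite mulr0n mul0r.
Qed.

End S.

Section S.
Variable R : realFieldType.

Lemma key T n (A : 'M[R]_n) (Z : 'I_T.+1 -> 'cV[R]_n) (g M : R) (l : 'I_T.+1) :
  0 <= g -> norm1 (A *m Z ord0) <= g * M -> (forall t, norm1 (Z t) <= M) ->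
  norm1 (\sum_k Dblock A l k *m Z k) <= (g + l%:R) / (l.+1)%:R * M.
Proof.
move=> g0 ha hz; rewrite Dsum.
case: ifP => [/eqP l0|l0].
  by rewrite l0 addr0 divr1.
case: ifP => [/eqP l1|l1].
  rewrite l1 norm1Z ger0_norm ?invr_ge0 ?ler0n //.
  have := @norm1D R _ (A *m Z ord0) (Z ord0); have := hz ord0.
  set a := norm1 _; set b := norm1 _; set c := norm1 _ => h1 h2.
  have -> : (g + 1%:R) / 2%:R * M = 2%:R^-1 * (g * M + M) by ring.
  by rewrite ler_wpM2l ?invr_ge0 ?ler0n // (le_trans h2) // lerD.
apply: le_trans (@norm1D R _ _ _) _; rewrite !norm1Z.
rewrite ger0_norm ?invr_ge0 ?ler0n // ger0_norm ?divr_ge0 ?ler0n //.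
have q0 : 0 <= (l.+1)%:R^-1 :> R by rewrite invr_ge0 ler0n.
have -> : (g + l%:R) / (l.+1)%:R * M = (l.+1)%:R^-1 * (g * M) + l%:R / (l.+1)%:R * M by ring.
apply: lerD; first by rewrite ler_wpM2l.
by rewrite ler_wpM2l ?divr_ge0 ?ler0n.
Qed.
End S.

Lemma normT_ge0 (R : realFieldType) T n (z : 'cV[R]_(\sum_(i < T) blk T n i)%N) : 0 <= normT z.
Proof.
rewrite /normT; elim/big_ind: _ => // [x y hx hy|t _].
  by rewrite le_max hx.
exact: norm1_ge0.
Qed.

Theorem lemma1 (R : realFieldType) (n T : nat) (beta : R) :
  (1 <= n)%N -> (1 <= T)%N -> 0 < beta -> beta < 1 ->
  (forall (A : 'M[R]_n) (z : 'cV[R]_(\sum_(i < T) blk T n i)%N),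
      AIMD_family beta A -> normT (Dmat T A *m z) <= normT z) /\
  (forall (A : 'M[R]_n) (z : 'cV[R]_(\sum_(i < T) blk T n i)%N),
      AIMD_family beta A -> in_WT z -> in_WT (Dmat T A *m z)) /\
  (forall z : 'cV[R]_(\sum_(i < T) blk T n i)%N,
      in_WT z -> z != 0 -> normT (Dmat T (Bmat n beta) *m z) < normT z).
Proof.
move=> hn; case: T => // T _ b0 b1.
have fam : forall A : 'M[R]_n, AIMD_family beta A ->
    (forall i j, 0 <= A i j) /\ (forall j, \sum_i A i j = 1).
  move=> A [b [hb ->]]; split => [i j|j]; first exact: AIMD_ge0 b0 b1 hb.
  exact: AIMD_colsum.
split; [|split].
- move=> A z /fam [h0 h1]; apply: normT_le; first exact: normT_ge0.
  move=> l; rewrite zblock_mul.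
  apply: le_trans (@key R _ _ _ _ 1 (normT z) l _ _ _) _ => //.

 by apply: le_trans (@norm1_mul R _ _ _ h0 h1) _; rewrite mul1r normT_ub.
  + by move=> t; rewrite normT_ub.
  + by rewrite nat1r divff ?mul1r // pnatr_eq0.
- move=> A z /fam [h0 h1] hz l; rewrite zblock_mul Dsum.
  have e0 : (ones R n)^T *m (A *m zblock z ord0) = 0.
    by rewrite mulmxA ones_mul // hz.
  case: ifP => _; first exact: e0.
  case: ifP => _.
    by rewrite -scalemxAr mulmxDr e0 hz addr0 scaler0.
  by rewrite mulmxDr -!scalemxAr e0 hz !scaler0 addr0.
- move=> z hz nz; have M0 := @normT_pos R _ _ _ nz.
  apply: normT_lt => // l; rewrite zblock_mul.
  have ha : norm1 (Bmat n beta *m zblock z ord0) <= beta * normT z.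
    rewrite B_mul ?hz // norm1Z ger0_norm; last exact: ltW.
    by rewrite ler_wpM2l ?normT_ub //; exact: ltW.
  have hb : forall t, norm1 (zblock z t) <= normT z by move=> t; rewrite normT_ub.
  apply: le_lt_trans (@key R _ _ _ _ beta (normT z) l (ltW b0) ha hb) _.
  rewrite mulrAC ltr_pdivrMr ?ltr0n //.
  by rewrite mulrC ltr_pM2l // -natr1 addrC ltrD2l.
Qed.
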